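(* Let $v\in[2,m-1]$ and $F\subseteq[m]\setminus\{v\}$. Then $F$ is a lower facet of $C(m,2d+1)\backslash v$ if and only if $F\cup\{y\}$ is a facet of $C([m]_{v+},2d+1)$. Dually, $F$ is an upper facet of $C(m,2d+1)\backslash v$ if and only if $F\cup\{x\}$ is a facet of $C([m]_{v+},2d+1)$.
   Context: For a finite ordered set $V$, a $(2d+1)$-subset $F\subseteq V$ is a facet of the cyclic polytope $C(V,2d+1)$ iff either every $w\in V\setminus F$ has an even number of elements of $F$ above it, or every such $w$ has an odd number (Gale's evenness criterion). Every facet of $C(m,2d+1)$ is uniquely a disjoint union of pairs $\{i,i+1\}$ of consecutive integers together with exactly one of the elements $1$ or $m$. For $v\in[2,m-1]$, the facets of the vertex figure $C(m,2d+1)\backslash v$ are the sets $F\subseteq[m]\setminus\{v\}$ with $F\cup\{v\}$ a facet of $C(m,2d+1)$; such $F$ is a lower facet of $C(m,2d+1)\backslash v$ if in this decomposition of $F\cup\{v\}$ the element $v$ is paired with $v+1$, and an upper facet if $v$ is paired with $v-1$. $[m]_{v+}=\{1,\dots,v-1,x,y,v+1,\dots,m\}$ is the ordered set with $v-1<x<y<v+1$. *)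

(* Defs.v *)
From HB Require Import structures.
From mathcomp Require Import all_boot all_order all_algebra.
From mathcomp Require Import finmap.
Set Implicit Arguments. Unset Strict Implicit. Unset Printing Implicit Defensive.
Import Order.TTheory GRing.Theory Num.Theory.
Local Open Scope fset_scope.

(* Facet of the cyclic polytope C(V, k) for a finite ordered set V,
   k = 2d+1, via Gale's evenness criterion (odd-dimensional version):
   F is a k-subset of V and either every w in V\F has an even number of
   elements of F above it, or every such w has an odd number. *)
Definition cyc_facet {disp : Order.disp_t} {T : orderType disp}
    (V F : {fset T}) (k : nat) : Prop :=
  [/\ F `<=` V, #|` F| = k &
      (forall w, w \in V `\` F -> ~~ odd #|` [fset u in F | (w < u)%O]|) \/
      (forall w, w \in V `\` F -> odd #|` [fset u in F | (w < u)%O]|)].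

Definition segm (m : nat) : {fset nat} := [fset i | i in iota 1 m].

Definition pair_decomp (m : nat) (G P : {fset nat}) (e : nat) : Prop :=
  [/\ (e == 1) || (e == m),
      (forall i, i \in P -> i.+1 \notin P),
      e \notin P, e.-1 \notin P &
      G = e |` (P `|` [fset i.+1 | i in P])].

Definition vfig_facet (m d v : nat) (F : {fset nat}) : Prop :=
  F `<=` segm m `\ v /\ cyc_facet (segm m) (v |` F) d.*2.+1.

(* lower facet: in the decomposition of F u {v}, v is paired with v+1 *)
Definition lower_facet (m d v : nat) (F : {fset nat}) : Prop :=
  vfig_facet m d v F /\
  exists P e, pair_decomp m (v |` F) P e /\ v \in P.

(* upper facet: in the decomposition of F u {v}, v is paired with v-1 *)
Definition upper_facet (m d v : nat) (F : {fset nat}) : Prop :=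
  vfig_facet m d v F /\
  exists P e, pair_decomp m (v |` F) P e /\ v.-1 \in P.

(* [m]_{v+} = {1,...,v-1, x, y, v+1, ..., m}, realised inside rat *)
Definition segm_vplus (m v : nat) (x y : rat) : {fset rat} :=
  [fset (i%:R : rat) | i in iota 1 m & i != v] `|` [fset x; y].

Definition natQ (F : {fset nat}) : {fset rat} := [fset (i%:R : rat) | i in F].

(* Main.v *)
Set Warnings "-notation-overridden,-ambiguous-paths,-notation-incompatible-prefix".
Require Import Defs.
From HB Require Import structures.
From mathcomp Require Import all_boot all_order all_algebra.
From mathcomp Require Import finmap zify.
Import Order.TTheory GRing.Theory Num.Theory.
Local Open Scope fset_scope.

Lemma card_sepU1 (K : choiceType) (P : pred K) a (A : {fset K}) :
  a \notin A -> #|` [fset u in a |` A | P u]| = (P a + #|` [fset u in A | P u]|)%N.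
Proof.
move=> aA; case Pa: (P a).
  rewrite (_ : [fset u in a |` A | P u] = a |` [fset u in A | P u]).
    by rewrite cardfsU1 !inE (negPf aA).
  by apply/fsetP => u; rewrite !inE; case: eqP => // ->; rewrite Pa.
congr #|` _|; apply/fsetP => u; rewrite !inE; case: eqP => // ->.
by rewrite Pa (negPf aA).
Qed.

Lemma card_sep_ext (K : choiceType) (P Q : pred K) (A : {fset K}) :
  {in A, P =1 Q} -> #|` [fset u in A | P u]| = #|` [fset u in A | Q u]|.
Proof.
move=> PQ; congr #|` _|; apply/fsetP => u; rewrite !inE.
by case uA: (u \in A) => //=; rewrite PQ.
Qed.

Lemma card_sep_im (K K' : choiceType) (f : K -> K') (P : pred K') (A : {fset K}) :
  injective f ->
  #|` [fset u in f @` A | P u]| = #|` [fset i in A | P (f i)]|.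
Proof.
move=> inj.
rewrite (_ : [fset u in f @` A | P u] = f @` [fset i in A | P (f i)]).
  by apply/eqP/card_in_imfsetP => i j _ _; apply: inj.
apply/fsetP => u; apply/idP/idP.
  rewrite !inE => /andP[/imfsetP[i /= iA ->] Pf].
  by apply/imfsetP; exists i => //; rewrite !inE iA.
move=> /imfsetP[i /=]; rewrite !inE => /andP[iA Pf] ->.
by rewrite Pf andbT; apply/imfsetP; exists i.
Qed.

Definition cnt (S : {fset nat}) (w : nat) := #|` [fset u in S | w < u]|.

Lemma cnt_rec S w : cnt S w = ((w.+1 \in S) + cnt S w.+1)%N.
Proof.
rewrite /cnt; case Sw: (w.+1 \in S).
  rewrite (_ : [fset u in S | w < u] = w.+1 |` [fset u in S | w.+1 < u]).
    by rewrite cardfsU1 !inE ltnn andbF.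
  apply/fsetP => u; rewrite !inE.
  by case: (ltngtP u w.+1) => [h|h|->]; rewrite ?andbF ?andbT ?Sw ?orbF ?orbT.
congr #|` _|; apply/fsetP => u; rewrite !inE.
by case: (ltngtP u w.+1) => [h|h|->]; rewrite ?andbF ?andbT ?Sw ?orbF ?orbT.
Qed.

Lemma cnt_big S w : (forall u, u \in S -> u <= w) -> cnt S w = 0.
Proof.
move=> h; apply/eqP; rewrite cardfs_eq0; apply/eqP/fsetP => u; rewrite !inE.
by case uS: (u \in S) => //=; rewrite ltnNge h.
Qed.

Lemma cnt_U1 e H w : e \notin H -> cnt (e |` H) w = ((w < e) + cnt H w)%N.
Proof. by move=> eH; rewrite /cnt card_sepU1. Qed.

Lemma down_ind (Q : nat -> Prop) N :
  (forall w, N <= w -> Q w) -> (forall w, Q w.+1 -> Q w) -> forall w, Q w.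
Proof.
move=> hN hS w; suff: forall k w, N <= w + k -> Q w by move=> /(_ N w); apply; rewrite leq_addl.
elim=> [|k IH] {}w; first by rewrite addn0; apply: hN.
by rewrite addnS -addSn => /IH; apply: hS.
Qed.

Lemma mem_succ (P : {fset nat}) j : (j.+1 \in [fset i.+1 | i in P]) = (j \in P).
Proof. by rewrite mem_imfset //; move=> a b []. Qed.

Lemma mem_succ' (P : {fset nat}) j : (j \in [fset i.+1 | i in P]) = (0 < j) && (j.-1 \in P).
Proof. by case: j => [|j] /=; [apply/negbTE/imfsetP => -[i]| rewrite mem_succ]. Qed.

Lemma decomp_cnt m G P e : pair_decomp m G P e ->
  forall w, odd (cnt G w) = (w < e) (+) (w \in P).
Proof.
case=> _ PP eP e1P GE.
have PG : forall i, i \in P -> (i \in G) && (i.+1 \in G).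
  by move=> i iP; rewrite GE !inE mem_succ iP !orbT.
have eG : e \in G by rewrite GE !inE eqxx.
have leG : forall u, u \in G -> u <= \max_(u <- G) u.
  by move=> u uG; exact: (@leq_bigmax_seq _ _ predT (fun u => u) u uG isT).
apply: (@down_ind _ (\max_(u <- G) u)).
  move=> w hw; rewrite cnt_big; last first.
    by move=> u uG; apply: leq_trans hw; apply: leG.
  have -> : (w < e) = false.
    by apply/negbTE; rewrite -leqNgt; apply: leq_trans hw; apply: leG.
  case wP: (w \in P) => //; have /andP[_ /leG] := PG _ wP.
  by move=> h; move: (leq_trans h hw); rewrite ltnn.
move=> w IH; rewrite cnt_rec oddD IH.
have He : (w < e) = (w.+1 < e) (+) (w.+1 == e).
  by rewrite -[w < e]/(w.+1 <= e) leq_eqVlt; case: eqP => [->|_]; rewrite ?ltnn ?addbF.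
have HG : (w.+1 \in G) = [|| w.+1 == e, w.+1 \in P | w \in P].
  by rewrite GE !inE mem_succ.
rewrite He HG; case: eqP => [we|_].
  have -> : (w.+1 \in P) = false by rewrite we; apply/negbTE.
  have -> : (w \in P) = false by apply/negbTE; move: e1P; rewrite -we.
  by case: (w.+1 < e).
case wP: (w \in P); case w1P: (w.+1 \in P); case: (w.+1 < e) => //=;
by move: (PP _ wP); rewrite w1P.
Qed.

Lemma mem_segm m i : (i \in segm m) = (0 < i <= m).
Proof. by rewrite /segm inE mem_iota add1n ltnS. Qed.

Lemma cnt0 S : (forall u, u \in S -> 0 < u) -> cnt S 0 = #|` S|.
Proof.
move=> h; rewrite /cnt; congr #|` _|; apply/fsetP => u; rewrite !inE.
by case uS: (u \in S) => //=; rewrite h.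
Qed.

Lemma decomp_build m G b e :
  1 < m -> G `<=` segm m -> odd #|` G| ->
  (forall w, w \in segm m `\` G -> odd (cnt G w) = b) ->
  e = (if b then m else 1) ->
  e \in G /\ pair_decomp m G [fset i in G `\ e | odd (cnt (G `\ e) i)] e.
Proof.
move=> m1 GS oG Gale he.
have Gle : forall u, u \in G -> 0 < u <= m by move=> u /(fsubsetP GS); rewrite mem_segm.
have e0 : 0 < e <= m by rewrite he; case: b {Gale he} => /=; rewrite ?leqnn ?andbT ltnW.
have ltb : forall w, 0 < w <= m -> w != e -> (w < e) = b.
  move=> w /andP[w0 wm]; rewrite he; case: b {Gale he e0} => /=.
    by rewrite ltn_neqAle wm andbT.
  by rewrite ltnNge w0.
have eG : e \in G.
  apply/negPn/negP => eG.
  have eS : e \in segm m `\` G by rewrite inE eG mem_segm e0.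
  have := Gale _ eS; move: he Gale {ltb e0 eS}; case: b => he _; subst e => /=.
    by rewrite cnt_big // => u /Gle /andP[].
  move: (cnt_rec G 0); rewrite cnt0; last by move=> u /Gle /andP[].
  by rewrite (negPf eG) add0n => <-; rewrite oG.
set H := G `\ e.
have GH : G = e |` H by rewrite /H fsetD1K.
have eH : e \notin H by rewrite /H !inE eqxx.
have cGH : forall w, cnt G w = ((w < e) + cnt H w)%N by move=> w; rewrite GH cnt_U1.
have Hle : forall u, u \in H -> 0 < u <= m by move=> u; rewrite /H !inE => /andP[_ /Gle].
have Even : forall w, w \notin H -> ~~ odd (cnt H w).
  move=> w wH; case: (posnP w) => [->|w0].
    rewrite cnt0; last by move=> u /Hle /andP[].
    by move: oG; rewrite GH cardfsU1 eH add1n.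
  case: (leqP w m) => wm; last first.
    by rewrite cnt_big // => u /Hle /andP[_ /leq_trans]; apply; apply: ltnW.
  case: (eqVneq w e) => [we|wne].
    move: he Gale {ltb}; case: b => he _; subst e w.
      by rewrite cnt_big // => u /Hle /andP[].
    move: (cnt_rec H 0); rewrite cnt0; last by move=> u /Hle /andP[].
    rewrite (negPf wH) add0n => <-.
    by move: oG; rewrite GH cardfsU1 eH add1n.
  have wG : w \in segm m `\` G.
    by rewrite in_fsetD mem_segm w0 wm andbT GH in_fset1U negb_or wne /= andbT.
  move: (Gale _ wG); rewrite cGH oddD ltb ?w0 // => /eqP.
  by rewrite oddb; case: (odd (cnt H w)); case: (b).
set P := [fset i in H | odd (cnt H i)].
have inP : forall i, (i \in P) = (i \in H) && odd (cnt H i) by move=> i; rewrite !inE.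
have Key1 : forall i, i \in P -> (i.+1 \in H) && (i.+1 \notin P).
  move=> i; rewrite inP => /andP[iH]; rewrite cnt_rec oddD.
  case iH1: (i.+1 \in H) => /=.
    by rewrite inP iH1 /=; case: (odd _).
  by move: (Even _ (negbT iH1)); case: (odd _).
have Key2 : forall j, j \in H -> j \notin P -> (0 < j) && (j.-1 \in P).
  move=> j jH; have /andP[j0 _] := Hle _ jH.
  rewrite j0 inP jH /=; case: j j0 jH => // k _ jH ok /=.
  have ok' : odd (cnt H k) by rewrite cnt_rec jH oddD /= (negbTE ok).
  rewrite inP ok' andbT; apply/negPn/negP => kH.
  by move: (Even _ kH); rewrite ok'.
split=> //; split.
- by rewrite he; case: (b); rewrite eqxx ?orbT.
- by move=> i /Key1 /andP[].
- by rewrite inP (negPf eH).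
- apply/negP => /Key1 /andP[]; rewrite prednK ?(negPf eH) //.
  by case/andP: e0.
apply/fsetP => u; rewrite in_fset1U in_fsetU mem_succ'.
case: (eqVneq u e) => [->|une]; first by rewrite eG.
rewrite /=; apply/idP/idP.
  move=> uG; have uH : u \in H by rewrite /H in_fsetD1 une.
  by case uP: (u \in P) => //=; apply: Key2 => //; rewrite uP.
case/orP => [|/andP[u0 /Key1 /andP[]]]; first by rewrite inP => /andP[]; rewrite /H in_fsetD1 => /andP[].
by rewrite prednK // /H in_fsetD1 => /andP[].
Qed.

Lemma gale_iff (disp : Order.disp_t) (T : orderType disp) (V F : {fset T}) k :
  cyc_facet V F k <-> [/\ F `<=` V, #|` F| = k &
    exists b, forall w, w \in V `\` F -> odd #|` [fset u in F | (w < u)%O]| = b].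
Proof.
split=> -[h1 h2 h3]; split=> //.
  by case: h3 => h; [exists false | exists true] => w /h; [move/negbTE|].
by case: h3 => -[] h; [right|left] => w /h ->.
Qed.

Lemma cntE (S : {fset nat}) w : #|` [fset u in S | (w < u)%O]| = cnt S w.
Proof. by []. Qed.

Definition GaleB m (G : {fset nat}) b :=
  forall w, w \in segm m `\` G -> odd (cnt G w) = b.

Lemma vfig_iff m d v F : 0 < v <= m -> F `<=` segm m `\ v ->
  vfig_facet m d v F <-> #|` (v |` F)| = d.*2.+1 /\ exists b, GaleB m (v |` F) b.
Proof.
move=> vS FS; rewrite /vfig_facet gale_iff; split.
  by case=> _ [_ h [b hb]]; split=> //; exists b => w /hb; rewrite cntE.
case=> h [b hb]; split=> //; split=> //.
  apply/fsubsetP => u; rewrite in_fset1U => /orP[/eqP->|/(fsubsetP FS)].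
    by rewrite mem_segm.
  by rewrite in_fsetD1 => /andP[].
by exists b => w /hb; rewrite cntE.
Qed.

Lemma decomp_gale m G P e v : 1 < m -> G `<=` segm m -> pair_decomp m G P e ->
  1 < v < m -> GaleB m G (e == m) /\ odd (cnt G v) = (e == m) (+) (v \in P).
Proof.
move=> m1 GS D /andP[v1 vm]; have dc := @decomp_cnt _ _ _ _ D.
case: D => e1m _ _ _ GE.
have eG : e \in G by rewrite GE in_fset1U eqxx.
have PG : forall i, i \in P -> i \in G by move=> i iP; rewrite GE !in_fset1U in_fsetU iP orbT.
have ltE : forall w, 0 < w <= m -> w != e -> (w < e) = (e == m).
  move=> w /andP[w0 wm] we; case/orP: e1m => /eqP ee; subst e.
    by rewrite ltnNge w0 eq_sym gtn_eqF.
  by rewrite eqxx ltn_neqAle we wm.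
split.
  move=> w; rewrite in_fsetD mem_segm => /andP[wG wS].
  rewrite dc ltE //; last by apply: contraNneq wG => ->.
  by rewrite (negbTE (contra (PG w) wG)) addbF.
rewrite dc ltE //; first by rewrite (ltnW v1) ltnW.
case/orP: e1m => /eqP->; first by rewrite gtn_eqF.
by rewrite ltn_eqF.
Qed.

Lemma build_mem m G b v : 1 < m -> G `<=` segm m -> odd #|` G| -> GaleB m G b ->
  1 < v < m -> v \in G ->
  let e := if b then m else 1 in
  let P := [fset i in G `\ e | odd (cnt (G `\ e) i)] in
  pair_decomp m G P e /\ (v \in P) = (odd (cnt G v) (+) b).
Proof.
move=> m1 GS oG Gale /andP[v1 vm] vG e P.
have [eG D] := @decomp_build m G b e m1 GS oG Gale erefl.
split=> //.
have ve : v != e by rewrite /e; case: (b); [rewrite ltn_eqF | rewrite gtn_eqF].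
have vbe : (v < e) = b by rewrite /e; case: (b); rewrite ?vm // ltnNge ltnW.
rewrite /P !inE ve vG /=.
have -> : cnt G v = ((v < e) + cnt (G `\ e) v)%N.
  by rewrite -cnt_U1 ?fsetD1K // !inE eqxx.
by rewrite oddD vbe oddb; case: (b); case: (odd _).
Qed.

Lemma lower_iff m d v F : 1 < v < m -> F `<=` segm m `\ v ->
  lower_facet m d v F <-> #|` (v |` F)| = d.*2.+1 /\
     exists b, GaleB m (v |` F) b /\ odd (cnt (v |` F) v) = ~~ b.
Proof.
move=> /andP[v1 vm] FS.
have m1 : 1 < m by apply: ltn_trans vm.
have GS : v |` F `<=` segm m.
  apply/fsubsetP => u; rewrite in_fset1U => /orP[/eqP->|/(fsubsetP FS)].
    by rewrite mem_segm ltnW // ltnW.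
  by rewrite in_fsetD1 => /andP[].
rewrite /lower_facet vfig_iff ?(ltnW v1) ?(ltnW vm) //; split.
  case=> -[hk _] [P [e [D vP]]]; split=> //; exists (e == m).
  have [g1 g2] := @decomp_gale m _ _ _ v m1 GS D (introT andP (conj v1 vm)).
  by rewrite g2 vP addbT.
case=> hk [b [g1 g2]]; split; first by split=> //; exists b.
have oG : odd #|` v |` F| by rewrite hk /= odd_double.
have vG : v \in v |` F by rewrite in_fset1U eqxx.
have [D vP] := @build_mem m _ b v m1 GS oG g1 (introT andP (conj v1 vm)) vG.
do 2 eexists; split; first exact: D.
by rewrite vP g2; case: (b).
Qed.

Lemma upper_iff m d v F : 1 < v < m -> F `<=` segm m `\ v ->
  upper_facet m d v F <-> #|` (v |` F)| = d.*2.+1 /\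
     exists b, GaleB m (v |` F) b /\ odd (cnt (v |` F) v) = b.
Proof.
move=> /andP[v1 vm] FS.
have m1 : 1 < m by apply: ltn_trans vm.
have GS : v |` F `<=` segm m.
  apply/fsubsetP => u; rewrite in_fset1U => /orP[/eqP->|/(fsubsetP FS)].
    by rewrite mem_segm ltnW // ltnW.
  by rewrite in_fsetD1 => /andP[].
have v0 : 0 < v by apply: ltnW.
rewrite /upper_facet vfig_iff ?(ltnW v1) ?(ltnW vm) //; split.
  case=> -[hk _] [P [e [D vP]]]; split=> //; exists (e == m).
  have [g1 g2] := @decomp_gale m _ _ _ v m1 GS D (introT andP (conj v1 vm)).
  split=> //; rewrite g2.
  case: D => _ PP _ _ _; move: (PP _ vP); rewrite prednK // => /negbTE ->.
  by rewrite addbF.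
case=> hk [b [g1 g2]]; split; first by split=> //; exists b.
have oG : odd #|` v |` F| by rewrite hk /= odd_double.
have vG : v \in v |` F by rewrite in_fset1U eqxx.
have [D vP] := @build_mem m _ b v m1 GS oG g1 (introT andP (conj v1 vm)) vG.
do 2 eexists; split; first exact: D.
move: vP; rewrite g2 addbb => vP.
case: (D) => e1m _ _ _ GE.
move: vG; rewrite {1}GE in_fset1U in_fsetU mem_succ' vP v0 /=.
case/orP=> // /eqP ve; exfalso; move: e1m ve; case: (b) => /=.
  by rewrite eqxx orbT => _ ve; move: vm; rewrite ve ltnn.
by move=> _ ve; move: v1; rewrite ve ltnn.
Qed.

Section RatSide.
Local Open Scope ring_scope.

Lemma natq_eq (v j : nat) (z : rat) : (0 < v)%N -> (v.-1)%:R < z -> z < (v.+1)%:R ->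
  j%:R = z -> j = v.
Proof.
move=> v0 h1 h2 ej; subst z; move: h1 h2; rewrite !ltr_nat => h1 h2.
apply/eqP; rewrite eqn_leq -ltnS h2 /=; move: h1; case: v v0 {h2} => //.
Qed.

Lemma natq_lt (v j : nat) (z : rat) : (0 < v)%N -> (v.-1)%:R < z -> z < (v.+1)%:R ->
  j != v -> (j%:R < z) = (j < v)%N.
Proof.
move=> v0 h1 h2 jv; case: (ltnP j v) => jlt.
  apply: (le_lt_trans _ h1); rewrite ler_nat; move: jlt; case: v {h1 h2 jv} v0 => //.
apply/negbTE; rewrite -leNgt; apply: (ltW (lt_le_trans h2 _)); rewrite ler_nat.
by rewrite ltn_neqAle eq_sym jv jlt.
Qed.

Lemma natq_gt (v j : nat) (z : rat) : (0 < v)%N -> (v.-1)%:R < z -> z < (v.+1)%:R ->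
  j != v -> (z < j%:R) = (v < j)%N.
Proof.
move=> v0 h1 h2 jv; case: (ltnP v j) => jlt.
  apply: (lt_le_trans h2); rewrite ler_nat //.
apply/negbTE; rewrite -leNgt; apply: (ltW (le_lt_trans _ h1)); rewrite ler_nat.
move: jlt; rewrite leq_eqVlt (negbTE jv) /=; case: v {h1 h2 jv} v0 => //.
Qed.

End RatSide.

Section RatSide2.
Local Open Scope ring_scope.

Lemma natQ_inj : injective (fun i : nat => (i%:R : rat)).
Proof. by move=> a b /eqP; rewrite eqr_nat => /eqP. Qed.

Lemma rat_side m v (F : {fset nat}) (z z' : rat) k (V' : {fset rat}) :
  (0 < v)%N -> F `<=` segm m `\ v ->
  (v.-1)%:R < z -> z < (v.+1)%:R -> (v.-1)%:R < z' -> z' < (v.+1)%:R -> z != z' ->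
  (forall w, (w \in V') =
     [|| w == z, w == z' | w \in [fset (i%:R : rat) | i in iota 1 m & i != v]]) ->
  cyc_facet V' (z |` natQ F) k <->
  #|` (v |` F)| = k /\
  exists b, GaleB m (v |` F) b /\ odd (addn (z' < z)%R (cnt F v)) = b.
Proof.
move=> v0 FS z1 z2 z1' z2' zz' memV.
have Fv : forall i, i \in F -> (i != v) && (0 < i <= m)%N.
  by move=> i /(fsubsetP FS); rewrite in_fsetD1 mem_segm.
have vF : v \notin F by apply/negP => /Fv; rewrite eqxx.
have mQ : forall j, (j%:R \in natQ F) = (j \in F) by move=> j; rewrite mem_imfset //; apply: natQ_inj.
have zQ : forall w : rat, (0 < v)%N -> (v.-1)%:R < w -> w < (v.+1)%:R -> w \notin natQ F.
  move=> w _ h1 h2; apply/negP => /imfsetP[i /= iF ei].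
  by move: (@natq_eq v i w v0 h1 h2 (esym ei)) => iv; move: vF; rewrite -iv iF.
have cardF' : #|` z |` natQ F| = #|` F|.+1.
  rewrite cardfsU1 (zQ z) //; congr (_.+1); apply/eqP/card_in_imfsetP.
  by move=> a b _ _; apply: natQ_inj.
have cardG : #|` v |` F| = #|` F|.+1 by rewrite cardfsU1 vF.
have cnt' : forall w : rat, #|` [fset u in z |` natQ F | (w < u)%O]| =
    addn (w < z)%R #|` [fset i in F | (w < i%:R)%R]|.
  by move=> w; rewrite card_sepU1 ?zQ // card_sep_im //; apply: natQ_inj.
have cz' : #|` [fset u in z |` natQ F | (z' < u)%O]| = addn (z' < z)%R (cnt F v).
  rewrite cnt'; congr (_ + _)%N; apply: card_sep_ext => i /Fv /andP[iv _].
  by rewrite /= (@natq_gt v i z' v0 z1' z2' iv).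
have ci : forall i, (i != v) -> #|` [fset u in z |` natQ F | (i%:R < u)%O]| = cnt (v |` F) i.
  move=> i iv; rewrite cnt' cnt_U1 // (@natq_lt v i z v0 z1 z2 iv); congr (_ + _)%N.
  by apply: card_sep_ext => j _; rewrite /= ltr_nat.
rewrite gale_iff; split.
  case=> _ hk [b hb]; split; first by rewrite cardG -cardF'.
  exists b; split.
    move=> w; rewrite in_fsetD mem_segm in_fset1U negb_or => /andP[/andP[wv wF] wS].
    rewrite -ci //; apply: hb; rewrite in_fsetD in_fset1U negb_or mQ wF andbT.
    rewrite memV; apply/andP; split.
      by apply/negP => /eqP /(@natq_eq v w z v0 z1 z2) /eqP; rewrite (negbTE wv).
    apply/orP; right; apply/orP; right; apply/imfsetP; exists w => //=.
    by rewrite !inE mem_iota add1n ltnS wS wv.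
  rewrite -cz'; apply: hb; rewrite in_fsetD in_fset1U negb_or eq_sym zz' (zQ z') //.
  by rewrite memV eqxx orbT.
case=> hk [b [g1 g2]]; split.
- apply/fsubsetP => u; rewrite in_fset1U => /orP[/eqP->|/imfsetP[i /= iF ->]].
    by rewrite memV eqxx.
  rewrite memV; apply/orP; right; apply/orP; right; apply/imfsetP; exists i => //=.
  by case/andP: (Fv _ iF) => iv /andP[i0 im]; rewrite !inE mem_iota add1n ltnS i0 im iv.
- by rewrite cardF' -cardG.
exists b => w; rewrite in_fsetD in_fset1U negb_or => /andP[/andP[wz wQ]].
rewrite memV (negbTE wz) /= => /orP[/eqP->|]; first by rewrite cz'.
case/imfsetP=> i /=; rewrite !inE mem_iota add1n ltnS => /andP[/andP[i0 im] iv] ew.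
subst w; rewrite ci // g1 // in_fsetD mem_segm i0 im in_fset1U negb_or iv andbT.
by move: wQ; rewrite mQ /= andbT.
Qed.

End RatSide2.

Theorem lemma4p7 (m d v : nat) (x y : rat) (F : {fset nat}) :
  2 <= v <= m.-1 ->
  ((v.-1)%:R < x)%R -> (x < y)%R -> (y < (v.+1)%:R)%R ->
  F `<=` segm m `\ v ->
  (lower_facet m d v F <-> cyc_facet (segm_vplus m v x y) (y |` natQ F) d.*2.+1) /\
  (upper_facet m d v F <-> cyc_facet (segm_vplus m v x y) (x |` natQ F) d.*2.+1).
Proof.
move=> /andP[v2 vm] x1 xy y2 FS.
have v1 : 1 < v by [].
have vlt : v < m by move: vm v2; case: (m) => [|m'] /=; [rewrite leqn0 => /eqP->|rewrite ltnS].
have v0 : 0 < v by apply: ltnW.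
have x2 : (x < (v.+1)%:R)%R by apply: lt_trans y2.
have y1 : ((v.-1)%:R < y)%R by apply: lt_trans xy.
have vF : v \notin F by apply/negP => /(fsubsetP FS); rewrite in_fsetD1 eqxx.
have cGv : cnt (v |` F) v = cnt F v by rewrite cnt_U1 // ltnn.
have vv : 1 < v < m by rewrite v1 vlt.
split.
  rewrite lower_iff // (@rat_side m v F y x) //; last first.
  - by move=> w; rewrite /segm_vplus in_fsetU in_fset2; case: (_ \in _); case: (w == x); case: (w == y).
  - by rewrite eq_sym lt_eqF.
  rewrite xy cGv; split=> -[hk [b [g1 g2]]]; split=> //; exists b; split=> //.
    by rewrite add1n /= g2 negbK.
  by move: g2; rewrite add1n /= => <-; rewrite negbK.
rewrite upper_iff // (@rat_side m v F x y) //; last first.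
- by move=> w; rewrite /segm_vplus in_fsetU in_fset2; case: (_ \in _); case: (w == x); case: (w == y).
- by rewrite lt_eqF.
by rewrite (lt_gtF xy) cGv add0n.
Qed.
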